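(* Let $k\ge r\ge3$ and $m\ge0$ be integers, and let $\pi\in\mathbb{C}_{<}(k,r|p,t)$ for some integers $p,t\ge0$ with $p+t=m$. Then there do not exist integers $p',t'\ge0$ with $p'\ne p$, $t'\ne t$, $p'+t'=m$ and $\pi\in\mathbb{C}_{<}(k,r|p',t')$.
   Context: A partition $\pi=(\pi_1,\dots,\pi_\ell)$ is a finite non-increasing sequence of positive integers; ''$a$ occurs in $\pi$'' means $a=\pi_i$ for some $i$. Göllnitz–Gordon marking: $GG(\pi)$ assigns a positive integer (mark) to each part, processing the parts from smallest to largest; $\pi_i$ receives the smallest positive integer different from the marks of all parts $\pi_g$ with $g>i$ and $\pi_i-\pi_g\le 2$, where $\pi_i-\pi_g<2$ is required when $\pi_i$ is odd. An ''$r$-marked part $a$'' is a part equal to $a$ with mark $r$. $N_i(\pi)$ is the number of parts with mark $i$; $\pi^{(i)}_1\ge\dots\ge\pi^{(i)}_{N_i(\pi)}$ are the parts with mark $i$, with $\pi^{(i)}_0=+\infty$, $\pi^{(i)}_{N_i(\pi)+1}=-\infty$. $\mathbb{C}(k,r)$: partitions with (i) no odd part repeated; (ii) $\pi_i\ge\pi_{i+k-1}+2$ for $1\le i\le\ell-k+1$, strict if $\pi_i$ even; (iii) at most $r-1$ parts $\le 2$. Starting types: for $\pi\in\mathbb{C}(k,r)$ with $N_2=N_2(\pi)\ge1$, let $l$ be the largest integer in $\{0,\dots,N_2\}$ such that no odd part of $\pi$ is $\ge\pi^{(2)}_l$; for $l<i\le N_2$, $\pi^{(2)}_i$ has type $s_{-1}$.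 For $b=1,\dots,l$ in increasing order, type and auxiliary $\sigma_b$: for $b=1$: Case 1: 1-marked part $\pi^{(2)}_1-1$ exists and $\pi^{(2)}_1+2$ does not occur: type $s_0$, $\sigma_1=\pi^{(2)}_1-1$; Case 2: 1-marked $\pi^{(2)}_1-2$ exists and $\pi^{(2)}_1+2$ does not occur: type $s_1$, $\sigma_1=\pi^{(2)}_1-2$; Case 3: 1-marked $\pi^{(2)}_1+2$ exists: type $s_2$, $\sigma_1=\pi^{(2)}_1+2$; Case 4: 1-marked $\pi^{(2)}_1$ exists: type $s_3$, $\sigma_1=\pi^{(2)}_1$. For $2\le b\le l$: Case 1: 1-marked $\pi^{(2)}_b-1$ exists and, if a 1-marked $\pi^{(2)}_b+2$ exists, $\sigma_{b-1}=\pi^{(2)}_b+2$: type $s_0$, $\sigma_b=\pi^{(2)}_b-1$; Case 2: same with $\pi^{(2)}_b-2$: type $s_1$, $\sigma_b=\pi^{(2)}_b-2$; Case 3: 1-marked $\pi^{(2)}_b+2$ exists and $\sigma_{b-1}\ne\pi^{(2)}_b+2$: type $s_2$, $\sigma_b=\pi^{(2)}_b+2$; Case 4: 1-marked $\pi^{(2)}_b$ exists: type $s_3$, $\sigma_b=\pi^{(2)}_b$. $\mathbb{C}_{<}(k,r|p,t)$: the set of $\pi\in\mathbb{C}(k,r)$ such that (1) no odd part is $\ge 2t+1$; (2) $\pi^{(2)}_{p+1}<2t+1<\pi^{(2)}_p$ (in particular $p\le N_2(\pi)$); (3) if $\pi^{(2)}_p=2t+2$ then it is of starting type $s_2$ or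 $s_3$; (4) if $\pi^{(2)}_{p+1}=2t$ then it is of starting type $s_0$ or $s_1$. *)

(* Defs.v *)
From mathcomp Require Import all_boot.
Set Implicit Arguments. Unset Strict Implicit. Unset Printing Implicit Defensive.

(* A partition pi = (pi_1,...,pi_l) is a seq nat, pi_i = nth 0 s (i-1). *)
Definition is_partition (s : seq nat) : bool :=
  sorted geq s && all (fun x => 0 < x) s.

Definition mex1 (l : seq nat) : nat :=
  head 0 [seq n <- iota 1 (size l).+1 | n \notin l].

(* the part a (processed later, larger) conflicts with an earlier processed part b
   (b = pi_g, g > i, so b <= a) *)
Definition gg_conflict (a b : nat) : bool :=
  (a - b <= 2) && (odd a ==> (a - b < 2)).

Fixpoint gg_aux (prev : seq (nat * nat)) (inc : seq nat) : seq (nat * nat) :=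
  match inc with
  | [::] => prev
  | a :: t =>
      let m := mex1 [seq q.2 | q <- prev & gg_conflict a q.1] in
      gg_aux ((a, m) :: prev) t
  end.

(* GG(pi): list of (part, mark), aligned with pi (i-th entry = (pi_i, mark of pi_i)) *)
Definition GG (s : seq nat) : seq (nat * nat) := gg_aux [::] (rev s).

(* parts with mark i, in non-increasing order: pi^(i)_1 >= ... *)
Definition marked_parts (s : seq nat) (i : nat) : seq nat :=
  [seq q.1 | q <- GG s & q.2 == i].

Definition N_ (s : seq nat) (i : nat) : nat := size (marked_parts s i).

(* pi^(i)_j for 1 <= j <= N_i *)
Definition pim (s : seq nat) (i j : nat) : nat := nth 0 (marked_parts s i) j.-1.

Definition has_marked (s : seq nat) (r a : nat) : bool := (a, r) \in GG s.

Definition in_C (k r : nat) (s : seq nat) : Prop :=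
  is_partition s /\
  (forall a, odd a -> count_mem a s <= 1) /\
  (forall i, i + k.-1 < size s ->
     if odd (nth 0 s i) then nth 0 s (i + k.-1) + 2 <= nth 0 s i
     else nth 0 s (i + k.-1) + 2 < nth 0 s i) /\
  count (fun x => x <= 2) s <= r.-1.

Inductive stype := s_m1 | s_0 | s_1 | s_2 | s_3.

(* l: the largest j in {0..N_2} such that no odd part is >= pi^(2)_j
   (pi^(2)_0 = +infinity) *)
Definition no_odd_ge (s : seq nat) (j : nat) : bool :=
  (j == 0) || all (fun x => ~~ odd x || (x < pim s 2 j)) s.

Definition l_index (s : seq nat) : nat :=
  \max_(0 <= j < (N_ s 2).+1 | no_odd_ge s j) j.

(* type and auxiliary sigma_b for 1 <= b (<= l); None when no case applies *)
Fixpoint stsig (s : seq nat) (b : nat) : option (stype * nat) :=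
  match b with
  | 0 => None
  | b'.+1 =>
    let a := pim s 2 b in
    if b' == 0 then
      if has_marked s 1 (a - 1) && (a + 2 \notin s) then Some (s_0, a - 1)
      else if has_marked s 1 (a - 2) && (a + 2 \notin s) then Some (s_1, a - 2)
      else if has_marked s 1 (a + 2) then Some (s_2, a + 2)
      else if has_marked s 1 a then Some (s_3, a)
      else None
    else
      let osig := omap snd (stsig s b') in
      let side := has_marked s 1 (a + 2) ==> (osig == Some (a + 2)) in
      if has_marked s 1 (a - 1) && side then Some (s_0, a - 1)
      else if has_marked s 1 (a - 2) && side then Some (s_1, a - 2)
      else if has_marked s 1 (a + 2) && (osig != Some (a + 2)) then Some (s_2, a + 2)
      else if has_marked s 1 a then Some (s_3, a)
      else None
  end.

Definition start_type (s : seq nat) (i : nat) : option stype :=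
  if l_index s < i then Some s_m1 else omap fst (stsig s i).

Definition in_Cless (k r p t : nat) (s : seq nat) : Prop :=
  in_C k r s /\
  (forall x, x \in s -> odd x -> x < 2 * t + 1) /\
  (p <= N_ s 2 /\
   (p < N_ s 2 -> pim s 2 p.+1 < 2 * t + 1) /\
   (0 < p -> 2 * t + 1 < pim s 2 p)) /\
  (0 < p -> pim s 2 p = 2 * t + 2 ->
     start_type s p = Some s_2 \/ start_type s p = Some s_3) /\
  (p < N_ s 2 -> pim s 2 p.+1 = 2 * t ->
     start_type s p.+1 = Some s_0 \/ start_type s p.+1 = Some s_1).

(* Main.v *)
Require Import Defs.
From mathcomp Require Import all_boot.
From mathcomp Require Import zify.

Lemma mex1_notin l : mex1 l \notin l.
Proof.
rewrite /mex1.
case E: [seq n <- iota 1 (size l).+1 | n \notin l] => [|x xs] /=.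
  exfalso.
  have sub : {subset iota 1 (size l).+1 <= l}.
    move=> y Hy; apply/negPn/negP => Hn.
    have : y \in [seq n <- iota 1 (size l).+1 | n \notin l] by rewrite mem_filter Hn Hy.
    by rewrite E.
  have := uniq_leq_size (iota_uniq 1 (size l).+1) sub.
  by rewrite size_iota ltnn.
have : x \in [seq n <- iota 1 (size l).+1 | n \notin l] by rewrite E mem_head.
by rewrite mem_filter => /andP [].
Qed.

Definition Qr (x y : nat * nat) : bool := (x.2 == y.2) ==> ~~ gg_conflict x.1 y.1.

Lemma gg_aux_fst prev inc : map fst (gg_aux prev inc) = catrev inc (map fst prev).
Proof. by elim: inc prev => [|a t IH] prev //=; rewrite IH. Qed.

Lemma gg_aux_pw prev inc : pairwise Qr prev -> pairwise Qr (gg_aux prev inc).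
Proof.
elim: inc prev => [|a t IH] prev //= Hp; apply: IH.
rewrite pairwise_cons Hp andbT; apply/allP => y Hy.
rewrite /Qr /=; apply/implyP => /eqP Hm; apply/negP => Hc.
have := mex1_notin [seq q.2 | q <- prev & gg_conflict a q.1].
rewrite Hm; move/negP; apply; apply/mapP; exists y => //.
by rewrite mem_filter Hc.
Qed.

Lemma pw_mapfilter (T U : eqType) (r : rel T) (r' : rel U) (f : T -> U) (P : pred T) (s : seq T) :
  (forall x y, P x -> P y -> r x y -> r' (f x) (f y)) ->
  pairwise r s -> pairwise r' (map f (filter P s)).
Proof.
move=> H; elim: s => [|x s IH] //= /andP [Ha Hp].
case Px: (P x) => /=; last exact: IH.
rewrite IH // andbT all_map. apply/allP => y.
rewrite mem_filter => /andP [Py Hy] /=; apply: H => //.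
by move/allP: Ha; apply.
Qed.

Definition Rr (a b : nat) : bool := (b <= a) && ~~ gg_conflict a b.

Lemma marked_pw s : is_partition s -> pairwise Rr (marked_parts s 2).
Proof.
case/andP => Hs _.
have HG : map fst (GG s) = s by rewrite /GG gg_aux_fst /= catrevE cats0 revK.
have H1 : pairwise Qr (GG s) by apply: gg_aux_pw.
have H2 : pairwise (relpre fst geq) (GG s).
  rewrite -pairwise_map HG -sorted_pairwise //.
  by move=> a b c /= H3 H4; apply: leq_trans H4 H3.
have H3 : pairwise [rel x y | Qr x y && relpre fst geq x y] (GG s) by rewrite pairwise_relI H1 H2.
rewrite /marked_parts; apply: (@pw_mapfilter _ _ _ _ _ _ _ _ H3).
move=> x y /eqP Px /eqP Py /= /andP [Hq Hg]; rewrite /Rr Hg /=.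
by move: Hq; rewrite /Qr Px Py eqxx.
Qed.

Lemma consec s j : is_partition s -> 0 < j -> j < N_ s 2 ->
  pim s 2 j.+1 + 2 <= pim s 2 j /\ (~~ odd (pim s 2 j) -> pim s 2 j.+1 + 3 <= pim s 2 j).
Proof.
move=> Hs Hj HN.
have := @marked_pw s Hs; move/(pairwiseP 0) => H.
have := H j.-1 j; rewrite /pim /= => H'.
have : Rr (nth 0 (marked_parts s 2) j.-1) (nth 0 (marked_parts s 2) j).
  apply: H'; rewrite /N_ in HN; rewrite ?inE /=; lia.
rewrite /Rr /gg_conflict.
set a := nth 0 _ j.-1; set b := nth 0 _ j.
case: (odd a) => /=; move=> /andP [Hba Hc]; move: Hc; rewrite ?implyTb ?implyFb; 
  case/boolP: (a - b <= 2) => //= Hx; lia.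
Qed.

Lemma chain s i n : is_partition s -> 0 < i -> i + n <= N_ s 2 ->
  pim s 2 (i + n) + 2 * n <= pim s 2 i.
Proof.
move=> Hs Hi; elim: n => [|n IH] HN; first by rewrite addn0 muln0 addn0.
have [C _] := @consec s (i + n) Hs ltac:(lia) ltac:(lia).
rewrite addnS; have := IH ltac:(lia); lia.
Qed.

Lemma key k r p t p' t' s : p < p' -> p + t = p' + t' ->
  in_Cless k r p t s -> in_Cless k r p' t' s -> False.
Proof.
move=> Hpp Hm [[Hs _] [_ [[HpN [H1 _]] [_ H4]]]] [_ [_ [[HpN' [_ H1']] [H3' _]]]].
have HpN2 : p < N_ s 2 by lia.
have A := H1 HpN2.
have B := H1' ltac:(lia).
case: (ltngtP p' p.+1) => Hc; first lia.
-
  have [C D] := @consec s (p.+1) Hs ltac:(lia) ltac:(lia).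
  have E := @chain s (p.+2) (p' - p.+2) Hs ltac:(lia) ltac:(lia).
  have Ep : p.+2 + (p' - p.+2) = p' by lia. rewrite Ep in E.
  case Ho: (odd (pim s 2 p.+1)).
  + have := odd_double_half (pim s 2 p.+1); rewrite Ho -muln2 => Hod.
    lia.
  + have := D ltac:(by rewrite Ho); lia.
- subst p'.
  have Heq : pim s 2 p.+1 = 2 * t' + 2 by lia.
  have Heq2 : pim s 2 p.+1 = 2 * t by lia.
  case: (H3' isT Heq) => E1; case: (H4 HpN2 Heq2) => E2; by rewrite E1 in E2.
Qed.

Theorem proposition5p2 (k r m p t : nat) (s : seq nat) :
  3 <= r -> r <= k -> p + t = m -> in_Cless k r p t s ->
  ~ (exists p' t' : nat,
       p' <> p /\ t' <> t /\ p' + t' = m /\ in_Cless k r p' t' s).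
Proof.
move=> _ _ Hm H [p' [t' [Hp [Ht [Hm' H']]]]].
case: (ltngtP p p') => Hc.
- by apply: (@key k r p t p' t' s Hc _ H H'); lia.
- by apply: (@key k r p' t' p t s Hc _ H' H); lia.
- by apply: Hp.
Qed.
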